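(* For every $\beta>1$, the set $\mathrm{Per}(\sigma|_{X_\beta})$ of all periodic points of the $\beta$-shift $X_\beta$ is strongly linkable.
   Context: Shift: for an alphabet $\mathcal A=\{0,1,\dots,r-1\}$, $\mathcal A^{\mathbb N}$ carries the metric $\rho(x,y)=2^{-\min\{k:x_k\ne y_k\}}$ for $x\ne y$, and $\sigma((\omega_i)_i)=(\omega_{i+1})_i$. $\beta$-shift: fix $\beta>1$, $T_\beta(x)=\beta x\bmod1$. The $\beta$-expansion of $1$ is $d_\beta=(d_j)_{j\ge1}$ with $d_j=\lfloor\beta T_\beta^{j-1}(1)\rfloor$. If $d_\beta$ ends in $0^\infty$ with last nonzero digit $d_k$, set $\widehat d_\beta=(d_1\dots d_{k-1}(d_k-1))^\infty$; otherwise $\widehat d_\beta=d_\beta$. The $\beta$-shift $X_\beta\subset\{0,\dots,\lfloor\beta\rfloor\}^{\mathbb N}$ is the closure of the set of sequences $b$ with $\sigma^k(b)\prec\widehat d_\beta$ (lexicographic order) for all $k\ge0$. $B(x,n,\varepsilon)=\{y:\rho(\sigma^jy,\sigma^jx)<\varepsilon,\ 0\le j<n\}$. A set $K$ of periodic points is strongly linkable if for all $y_1,y_2\in K$ and $\varepsilon>0$ there is $N=N(y_1,y_2,\varepsilon)$ such that for all integers $p_1,p_2\ge N$ with $\sigma^{p_j}y_j=y_j$ ($j=1,2$) there exist $z\in K$ and integers $q_1\le q_2$ with $\sigma^{q_2}z=z$, $p_1\le q_1\le(1+\varepsilon)p_1$, $z\in B(y_1,p_1,\varepsilon)$, $p_2\le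 q_2-q_1\le(1+\varepsilon)p_2$ and $\sigma^{q_1}z\in B(y_2,p_2,\varepsilon)$. *)

(* Defs.v *)
From Stdlib Require Import Reals Lra Lia ZArith Arith Classical ClassicalEpsilon.
Open Scope R_scope.

Definition sequence := nat -> nat.

Definition shift (x : sequence) : sequence := fun i => x (S i).
Definition shiftn (n : nat) (x : sequence) : sequence := fun i => x (i + n)%nat.

Definition rho_spec (x y : sequence) (r : R) : Prop :=
  ((forall k, x k = y k) /\ r = 0) \/
  (exists m : nat, (forall k, (k < m)%nat -> x k = y k) /\ x m <> y m /\ r = / (2 ^ m)).

Definition rho (x y : sequence) : R := epsilon (inhabits 0) (rho_spec x y).

Definition bowen_ball (x : sequence) (n : nat) (eps : R) (y : sequence) : Prop :=
  forall j : nat, (j < n)%nat -> rho (shiftn j y) (shiftn j x) < eps.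

Definition Tbeta (beta x : R) : R := frac_part (beta * x).

(* floor as a nat (used only on nonnegative arguments). *)
Definition nfloor (x : R) : nat := Z.to_nat (Int_part x).

(* beta-expansion of 1, 0-indexed: dseq beta i = d_{i+1} = floor(beta T^i(1)). *)
Definition dseq (beta : R) : sequence :=
  fun i => nfloor (beta * Nat.iter i (Tbeta beta) 1).

Definition finite_expansion_at (beta : R) (k : nat) : Prop :=
  dseq beta k <> 0%nat /\ forall j, (k < j)%nat -> dseq beta j = 0%nat.

(* The periodic word (d_1 ... d_{k} (d_{k+1}-1))^infty in 0-indexed form. *)
Definition hat_of (d : sequence) (k : nat) : sequence :=
  fun i => let r := (i mod (S k))%nat in
           if Nat.eqb r k then (d k - 1)%nat else d r.

Definition hat_d (beta : R) : sequence :=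
  match excluded_middle_informative (exists k, finite_expansion_at beta k) with
  | left H => hat_of (dseq beta) (proj1_sig (constructive_indefinite_description _ H))
  | right _ => dseq beta
  end.

Definition lex_lt (a b : sequence) : Prop :=
  exists n, (forall i, (i < n)%nat -> a i = b i) /\ (a n < b n)%nat.

Definition in_alphabet (beta : R) (x : sequence) : Prop :=
  forall i, (x i <= nfloor beta)%nat.

Definition beta_admissible (beta : R) (b : sequence) : Prop :=
  in_alphabet beta b /\ forall k : nat, lex_lt (shiftn k b) (hat_d beta).

Definition X_beta (beta : R) (x : sequence) : Prop :=
  in_alphabet beta x /\
  forall eps : R, 0 < eps -> exists b, beta_admissible beta b /\ rho x b < eps.

Definition Per_beta (beta : R) (x : sequence) : Prop :=
  X_beta beta x /\ exists p : nat, (1 <= p)%nat /\ forall i, shiftn p x i = x i.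

Definition strongly_linkable (K : sequence -> Prop) : Prop :=
  forall y1 y2 : sequence, K y1 -> K y2 ->
  forall eps : R, 0 < eps ->
  exists N : nat,
  forall p1 p2 : nat, (N <= p1)%nat -> (N <= p2)%nat ->
    (forall i, shiftn p1 y1 i = y1 i) -> (forall i, shiftn p2 y2 i = y2 i) ->
    exists (z : sequence) (q1 q2 : nat),
      K z /\ (q1 <= q2)%nat /\ (forall i, shiftn q2 z i = z i) /\
      (p1 <= q1)%nat /\ INR q1 <= (1 + eps) * INR p1 /\
      bowen_ball y1 p1 eps z /\
      (p2 <= q2 - q1)%nat /\ INR (q2 - q1) <= (1 + eps) * INR p2 /\
      bowen_ball y2 p2 eps (shiftn q1 z).

(* Main.v *)
Require Import Defs.
From Stdlib Require Import Reals Lra Lia ZArith Arith Classical ClassicalEpsilon.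
Open Scope R_scope.

Lemma nat_min (P : nat -> Prop) : (exists n, P n) -> exists n, P n /\ forall i, (i < n)%nat -> ~ P i.
Proof.
  intros [n Hn]. revert Hn. induction n as [n IH] using lt_wf_ind. intros Hn.
  destruct (classic (exists i, (i < n)%nat /\ P i)) as [[i [Hi Pi]]|H].
  - exact (IH i Hi Pi).
  - exists n. split; auto. intros i Hi Pi. apply H; eauto.
Qed.

Lemma lex_asym a b : lex_lt a b -> lex_lt b a -> False.
Proof.
  intros [n [H1 H2]] [m [H3 H4]].
  destruct (lt_eq_lt_dec n m) as [[Hlt|Heq]|Hgt].
  - rewrite (H3 n Hlt) in H2. lia.
  - subst. lia.
  - rewrite (H1 m Hgt) in H4. lia.
Qed.

Lemma rho_spec_ex x y : exists r, rho_spec x y r.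
Proof.
  destruct (classic (forall k, x k = y k)) as [H|H].
  - exists 0. left. auto.
  - apply not_all_ex_not in H. destruct (nat_min (fun k => x k <> y k) H) as [m [Hm Hmin]].
    exists (/ 2 ^ m). right. exists m. repeat split; auto.
    intros k Hk. apply NNPP. apply Hmin; auto.
Qed.

Lemma rho_ok x y : rho_spec x y (rho x y).
Proof. unfold rho. apply epsilon_spec. apply rho_spec_ex. Qed.

Lemma inv_pow_le (a b : nat) : (a <= b)%nat -> / 2 ^ b <= / 2 ^ a.
Proof.
  intros H. apply Rinv_le_contravar. apply pow_lt; lra. apply Rle_pow; lra || lia.
Qed.

Lemma rho_agree x y L : (forall i, (i < L)%nat -> x i = y i) -> rho x y <= / 2 ^ L.
Proof.
  intros H. destruct (rho_ok x y) as [[_ ->]|[m [H1 [H2 ->]]]].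
  - left. apply Rinv_0_lt_compat, pow_lt; lra.
  - apply inv_pow_le. destruct (le_lt_dec L m); auto. exfalso. apply H2, H. lia.
Qed.

Lemma rho_small x y L : rho x y < / 2 ^ L -> forall i, (i <= L)%nat -> x i = y i.
Proof.
  intros H i Hi. destruct (rho_ok x y) as [[Ha _]|[m [H1 [H2 Hr]]]].
  - auto.
  - rewrite Hr in H. destruct (le_lt_dec m L) as [Hml|Hml].
    + pose proof (inv_pow_le _ _ Hml). lra.
    + apply H1. lia.
Qed.

Lemma INR_le_pow n : INR n <= 2 ^ n.
Proof.
  induction n. simpl; lra. rewrite S_INR. simpl.
  assert (1 <= 2 ^ n) by (apply pow_R1_Rle; lra). lra.
Qed.

Lemma exM eps : 0 < eps -> exists M, / 2 ^ M < eps.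
Proof.
  intros He. destruct (archimed_cor1 eps He) as [N [H1 H2]]. exists N.
  eapply Rle_lt_trans; [|exact H1]. apply Rinv_le_contravar.
  apply lt_0_INR; lia. apply INR_le_pow.
Qed.

Lemma lex_ext a a' b b' : (forall i, a i = a' i) -> (forall i, b i = b' i) -> lex_lt a b -> lex_lt a' b'.
Proof.
  intros Ha Hb [n [H1 H2]]. exists n. split.
  intros i Hi. rewrite <- Ha, <- Hb; auto. rewrite <- Ha, <- Hb; auto.
Qed.

Lemma d0_ge1 beta : 1 < beta -> (1 <= dseq beta 0)%nat.
Proof.
  intros Hb. unfold dseq, nfloor. simpl. rewrite Rmult_1_r.
  destruct (base_Int_part beta) as [_ H].
  assert (0 < IZR (Int_part beta)) by lra. apply lt_IZR in H0. lia.
Qed.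

Lemma no_fin0 beta : 1 < beta -> dseq beta 0%nat = 1%nat -> finite_expansion_at beta 0%nat -> False.
Proof.
  intros Hb H0 [_ Hf].
  set (t := fun j => Nat.iter j (Tbeta beta) 1).
  assert (Ht1 : t 1%nat = beta - 1).
  { unfold t. simpl. unfold Tbeta, frac_part. rewrite Rmult_1_r.
    unfold dseq, nfloor in H0. simpl in H0. rewrite Rmult_1_r in H0.
    assert (Int_part beta = 1%Z) by lia. rewrite H. simpl. lra. }
  assert (Hstep : forall j, (1 <= j)%nat -> t (S j) = beta * t j /\ 0 <= t j < 1).
  { intros j Hj. assert (Hr : 0 <= t j < 1).
    { destruct j. lia. unfold t. simpl. unfold Tbeta. match goal with |- context [frac_part ?r] => pose proof (base_fp r) end. lra. }
    split; auto.
    pose proof (Hf j ltac:(lia)) as Hd. unfold dseq, nfloor in Hd. fold (t j) in Hd.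
    destruct (base_Int_part (beta * t j)) as [Hi1 Hi2].
    assert (Hle : (Int_part (beta * t j) <= 0)%Z) by lia.
    apply IZR_le in Hle.
    assert (Hge : (-1 < Int_part (beta * t j))%Z).
    { apply lt_IZR. assert (0 <= beta * t j) by nra. simpl. lra. }
    assert (Int_part (beta * t j) = 0%Z) by lia.
    unfold t at 1. simpl. fold (t j). unfold Tbeta, frac_part. rewrite H. simpl. lra. }
  assert (Hlow : forall j, t (S j) >= (beta - 1) + INR j * (beta - 1) ^ 2).
  { induction j. rewrite Ht1. simpl. lra.
    destruct (Hstep (S j) ltac:(lia)) as [E _]. rewrite E. rewrite S_INR.
    assert (0 <= INR j) by apply pos_INR. assert (0 <= INR j * (beta - 1) ^ 2) by (apply Rmult_le_pos; [lra| apply pow2_ge_0]). assert ((beta - 1) * (t (S j) - (beta - 1)) >= 0) by (apply Rle_ge, Rmult_le_pos; lra). nra. }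
  destruct (archimed_cor1 ((beta - 1) ^ 2) ltac:(nra)) as [N [HN1 HN2]].
  assert (HNp : 0 < INR N) by (apply lt_0_INR; lia).
  assert (1 < INR N * (beta - 1) ^ 2).
  { apply (Rmult_lt_compat_l (INR N)) in HN1; auto. rewrite Rinv_r in HN1; lra. }
  pose proof (Hlow N). destruct (Hstep (S N) ltac:(lia)) as [_ Hr]. lra.
Qed.

Lemma last_nz (P : nat -> Prop) m : P 0%nat -> (forall j, (m <= j)%nat -> ~ P j) ->
  exists k, P k /\ forall j, (k < j)%nat -> ~ P j.
Proof.
  revert P. induction m; intros P H0 H.
  - exfalso. apply (H 0%nat); auto.
  - destruct (classic (P m)) as [Hm|Hm].
    + exists m. split; [exact Hm|]. intros j Hj. apply H. lia.
    + apply IHm; [exact H0|]. intros j Hj. destruct (Nat.eq_dec j m); [subst; exact Hm| apply H; lia].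
Qed.

Lemma D_props beta : 1 < beta ->
  (1 <= hat_d beta 0%nat)%nat /\ forall m, exists f, (m <= f)%nat /\ hat_d beta f <> 0%nat.
Proof.
  intros Hb. pose proof (d0_ge1 beta Hb) as Hd0.
  unfold hat_d. destruct excluded_middle_informative as [H|H].
  - destruct (constructive_indefinite_description _ H) as [k Hk]. simpl.
    assert (H0 : (1 <= hat_of (dseq beta) k 0)%nat).
    { unfold hat_of. rewrite Nat.mod_0_l by lia.
      destruct (Nat.eqb_spec 0 k).
      - subst. destruct (Nat.eq_dec (dseq beta 0%nat) 1%nat).
        + exfalso. eapply no_fin0; eauto.
        + lia.
      - lia. }
    split; auto. intros m. exists (m * S k)%nat. split. nia.
    unfold hat_of in *. rewrite Nat.mod_mul by lia. rewrite Nat.mod_0_l in H0 by lia. lia.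
  - split; auto. intros m. apply NNPP. intros Hn.
    assert (Hz : forall j, (m <= j)%nat -> ~ (dseq beta j <> 0%nat)).
    { intros j Hj Hj'. apply Hn. eauto. }
    destruct (last_nz (fun j => dseq beta j <> 0%nat) m ltac:(cbv beta; lia) Hz) as [k [Hk1 Hk2]].
    apply H. exists k. split; auto. intros j Hj. apply NNPP. apply Hk2; auto.
Qed.

Definition Xp beta x := in_alphabet beta x /\ forall k, ~ lex_lt (hat_d beta) (shiftn k x).

Lemma X_Xp beta x : X_beta beta x -> Xp beta x.
Proof.
  intros [Ha Hc]. split; auto. intros k [n [H1 H2]].
  destruct (Hc (/ 2 ^ (k+n))) as [b [[_ Hb] Hr]].
  { apply Rinv_0_lt_compat, pow_lt; lra. }
  pose proof (rho_small _ _ _ Hr) as Hs.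
  apply (lex_asym (shiftn k b) (hat_d beta)); [apply Hb|]. exists n; split.
  - intros i Hi. unfold shiftn in *. rewrite <- Hs by lia. apply H1; auto.
  - unfold shiftn in *. rewrite <- Hs by lia. auto.
Qed.

Lemma Xp_X beta x : 1 < beta -> Xp beta x -> X_beta beta x.
Proof.
  intros Hb [Ha Hp]. destruct (D_props beta Hb) as [_ Dnz].
  split; auto. intros eps He. destruct (exM eps He) as [L HL].
  exists (fun i => if (i <? L)%nat then x i else 0%nat). split; [split|].
  - intros i. destruct (Nat.ltb_spec i L); [apply Ha| lia].
  - intros k.
    destruct (nat_min (fun i => (L - k <= i)%nat /\ hat_d beta i <> 0%nat) (Dnz (L - k)%nat))
      as [f [[Hf1 Hf2] Hfmin]].
    assert (Hz : forall i, (L - k <= i < f)%nat -> hat_d beta i = 0%nat).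
    { intros i Hi. destruct (Nat.eq_dec (hat_d beta i) 0); auto. exfalso. apply (Hfmin i); [lia|split; [lia|auto]]. }
    destruct (classic (exists i, (i < f)%nat /\ x (i + k)%nat <> hat_d beta i)) as [Hd|Hd].
    + destruct (nat_min _ Hd) as [i0 [[Hi0 Hne] Hmin]].
      assert (Heq : forall j, (j < i0)%nat -> x (j + k)%nat = hat_d beta j).
      { intros j Hj. apply NNPP. intros Hc. apply (Hmin j Hj). split; [lia|auto]. }
      destruct (lt_eq_lt_dec (x (i0 + k)%nat) (hat_d beta i0)) as [[Hlt|Hq]|Hgt]; [|lia|].
      * destruct (lt_dec (i0 + k) L).
        -- exists i0. unfold shiftn. split.
           ++ intros j Hj. destruct (Nat.ltb_spec (j + k) L); [apply Heq; auto| lia].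
           ++ destruct (Nat.ltb_spec (i0 + k) L); lia.
        -- rewrite Hz in Hlt by lia. lia.
      * exfalso. apply (Hp k). exists i0. unfold shiftn. split; auto.
        intros j Hj. symmetry. apply Heq; auto.
    + exists f. unfold shiftn. split.
      * intros j Hj. destruct (Nat.ltb_spec (j + k) L).
        -- apply NNPP. intros Hc. apply Hd. exists j. split; auto.
        -- symmetry. apply Hz. lia.
      * destruct (Nat.ltb_spec (f + k) L); lia.
  - eapply Rle_lt_trans; [|exact HL]. apply rho_agree. intros i Hi.
    destruct (Nat.ltb_spec i L); [auto|lia].
Qed.

Lemma per_iter (y : sequence) P : (forall i, y (i + P)%nat = y i) -> forall c i, y (i + P * c)%nat = y i.
Proof.
  intros H c. induction c; intros i. f_equal; lia.
  replace (i + P * S c)%nat with ((i + P * c) + P)%nat by lia. rewrite H. auto.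
Qed.

Lemma block beta (z y : sequence) s L G P t :
  (1 <= hat_d beta 0%nat)%nat -> Xp beta y -> (1 <= P)%nat -> (P < G)%nat ->
  (forall i, y (i + P)%nat = y i) ->
  (forall i, (i < L)%nat -> z (s + i)%nat = y i) ->
  (forall i, (i < G)%nat -> z (s + L + i)%nat = 0%nat) ->
  (t < L)%nat -> ~ lex_lt (hat_d beta) (shiftn (s + t) z).
Proof.
  intros HD0 [_ Hy] HP HPG Hper Hz1 Hz0 Ht [n [H1 H2]].
  unfold shiftn in H1, H2.
  destruct (lt_dec (t + n) L).
  - apply (Hy t). exists n. split.
    + intros i Hi. unfold shiftn. rewrite H1 by lia. rewrite <- Hz1 by lia. f_equal; lia.
    + unfold shiftn. rewrite <- Hz1 by lia. replace (s + (n+t))%nat with (n + (s+t))%nat by lia. exact H2.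
  - set (m := (L - t)%nat).
    assert (Hyt : y t = hat_d beta 0%nat).
    { rewrite H1 by lia. rewrite <- Hz1 by lia. f_equal; lia. }
    set (c := ((L - t) / P + 1)%nat).
    assert (Hc : (m <= P * c < m + G)%nat).
    { pose proof (Nat.div_mod_eq (L - t) P). pose proof (Nat.mod_upper_bound (L - t) P ltac:(lia)).
      unfold c, m. lia. }
    assert (Hyc : y (P * c + t)%nat <> 0%nat).
    { rewrite Nat.add_comm, per_iter; auto. lia. }
    assert (HexD : exists f, (m <= f)%nat /\ hat_d beta f <> 0%nat /\ (f < m + G)%nat).
    { apply NNPP. intros Hn.
      assert (HDz : forall f, (m <= f < m + G)%nat -> hat_d beta f = 0%nat).
      { intros f Hf. destruct (Nat.eq_dec (hat_d beta f) 0); auto. exfalso. apply Hn. exists f; repeat split; lia. }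
      destruct (nat_min (fun j => (m <= j)%nat /\ y (j + t)%nat <> 0%nat)) as [j0 [[Hj1 Hj2] Hjmin]].
      { exists (P * c)%nat. split; [lia|auto]. }
      assert (Hj0 : (j0 <= P * c)%nat).
      { destruct (le_lt_dec j0 (P * c)); auto. exfalso. apply (Hjmin (P * c)%nat); [lia|split;[lia|auto]]. }
      apply (Hy t). exists j0. unfold shiftn. split.
      - intros i Hi. destruct (lt_dec i m).
        + rewrite H1 by lia. rewrite <- Hz1 by lia. f_equal; lia.
        + rewrite HDz by lia. destruct (Nat.eq_dec (y (i + t)%nat) 0); auto. exfalso. apply (Hjmin i); [lia|split;[lia|auto]].
      - rewrite HDz by lia. lia. }
    destruct (nat_min (fun f => (m <= f)%nat /\ hat_d beta f <> 0%nat)) as [f0 [[Hf1 Hf2] Hfmin]].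
    { destruct HexD as [f [? [? ?]]]. exists f; auto. }
    assert (Hf0 : (f0 < m + G)%nat).
    { destruct HexD as [f [Ha [Hb Hc']]]. destruct (le_lt_dec (m + G) f0); [|lia].
      exfalso. apply (Hfmin f); [lia|auto]. }
    apply (lex_asym (hat_d beta) (shiftn (s + t) z)).
    + exists n. unfold shiftn. split; auto.
    + exists f0. unfold shiftn. split.
      * intros i Hi. destruct (lt_dec i m).
        -- rewrite H1 by lia. auto.
        -- replace (i + (s + t))%nat with (s + L + (i - m))%nat by (unfold m; lia).
           rewrite Hz0 by lia. destruct (Nat.eq_dec (hat_d beta i) 0); auto. exfalso. apply (Hfmin i); [lia|split;[lia|auto]].
      * replace (f0 + (s + t))%nat with (s + L + (f0 - m))%nat by (unfold m; lia).
        rewrite Hz0 by lia. lia.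
Qed.

Lemma gap beta (z : sequence) k : (1 <= hat_d beta 0%nat)%nat -> z k = 0%nat -> ~ lex_lt (hat_d beta) (shiftn k z).
Proof.
  intros HD Hz [n [H1 H2]]. unfold shiftn in *. destruct n.
  - simpl in H2. lia.
  - specialize (H1 0%nat ltac:(lia)). simpl in H1. lia.
Qed.

Theorem proposition5p11 (beta : R) (Hbeta : 1 < beta) :
  strongly_linkable (Per_beta beta).
Proof.
  intros y1 y2 [Hy1X [P1 [HP1 Hper1]]] [Hy2X [P2 [HP2 Hper2]]] eps Heps.
  destruct (D_props beta Hbeta) as [D0 _].
  destruct (exM eps Heps) as [M HM].
  pose (G := (P1 + P2 + 1)%nat). assert (HG : G = (P1 + P2 + 1)%nat) by reflexivity. clearbody G.
  destruct (archimed_cor1 eps Heps) as [N0 [HN1 HN2]].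
  assert (Hbig : forall p, (N0 * (M + G + 1) <= p)%nat -> INR (M + G) <= eps * INR p).
  { intros p Hp. apply le_INR in Hp. rewrite mult_INR in Hp.
    assert (HN0 : 0 < INR N0) by (apply lt_0_INR; lia).
    assert (He1 : 1 < eps * INR N0).
    { apply (Rmult_lt_compat_l (INR N0)) in HN1; auto. rewrite Rinv_r in HN1; lra. }
    assert (HMG : INR (M + G + 1) = INR (M + G) + 1) by (rewrite plus_INR; simpl; lra).
    rewrite HMG in Hp. assert (0 <= INR (M + G)) by apply pos_INR.
    assert (eps * (INR N0 * (INR (M + G) + 1)) <= eps * INR p) by (apply Rmult_le_compat_l; lra).
    nra. }
  exists (N0 * (M + G + 1))%nat. intros p1 p2 Hp1 Hp2 Hyp1 Hyp2.
  pose (q1 := (p1 + M + G)%nat). assert (Hq1 : q1 = (p1 + M + G)%nat) by reflexivity. clearbody q1.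
  pose (q2 := (q1 + (p2 + M + G))%nat). assert (Hq2 : q2 = (q1 + (p2 + M + G))%nat) by reflexivity. clearbody q2.
  pose (w := fun r => if (r <? p1 + M)%nat then y1 r else if (r <? q1)%nat then 0%nat
                      else if (r <? q1 + (p2 + M))%nat then y2 (r - q1)%nat else 0%nat).
  pose (z := fun i => w (i mod q2)%nat).
  assert (Hzw : forall i, (i < q2)%nat -> z i = w i).
  { intros i Hi. unfold z. rewrite Nat.mod_small; auto. }
  assert (Hzmod : forall i k, z (i + k)%nat = z (i + k mod q2)%nat).
  { intros i k. unfold z. rewrite Nat.add_mod_idemp_r; auto. lia. }
  assert (Hzper : forall i, z (i + q2)%nat = z i).
  { intros i. unfold z. replace (i + q2)%nat with (i + 1 * q2)%nat by lia. rewrite Nat.mod_add; auto. lia. }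
  assert (Hw1 : forall i, (i < p1 + M)%nat -> w i = y1 i).
  { intros i Hi. unfold w. destruct (Nat.ltb_spec i (p1 + M)); lia || auto. }
  assert (Hw2 : forall i, (p1 + M <= i < q1)%nat -> w i = 0%nat).
  { intros i Hi. unfold w. destruct (Nat.ltb_spec i (p1 + M)); [lia|]. destruct (Nat.ltb_spec i q1); lia. }
  assert (Hw3 : forall i, (q1 <= i < q1 + (p2 + M))%nat -> w i = y2 (i - q1)%nat).
  { intros i Hi. unfold w. destruct (Nat.ltb_spec i (p1 + M)); [lia|]. destruct (Nat.ltb_spec i q1); [lia|].
    destruct (Nat.ltb_spec i (q1 + (p2 + M))); lia || auto. }
  assert (Hw4 : forall i, (q1 + (p2 + M) <= i)%nat -> w i = 0%nat).
  { intros i Hi. unfold w. destruct (Nat.ltb_spec i (p1 + M)); [lia|]. destruct (Nat.ltb_spec i q1); [lia|].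
    destruct (Nat.ltb_spec i (q1 + (p2 + M))); lia. }
  clearbody w z.
  pose proof (X_Xp _ _ Hy1X) as Hy1p. pose proof (X_Xp _ _ Hy2X) as Hy2p.
  assert (Hpe1 : forall i, y1 (i + P1)%nat = y1 i) by (intros i; apply Hper1).
  assert (Hpe2 : forall i, y2 (i + P2)%nat = y2 i) by (intros i; apply Hper2).
  exists z, q1, q2. split; [|split; [lia|split; [|split; [lia|split; [|split; [|split; [lia|split]]]]]]].
  - split.
    + apply Xp_X; auto. split.
      * intros i. rewrite <- (Nat.add_0_l i), Hzmod, Nat.add_0_l.
        assert (Hlt : (i mod q2 < q2)%nat) by (apply Nat.mod_upper_bound; lia).
        rewrite Hzw by auto. set (r := (i mod q2)%nat) in *.
        destruct (lt_dec r (p1 + M)). rewrite Hw1 by lia. apply (proj1 Hy1X).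
        destruct (lt_dec r q1). rewrite Hw2 by lia. lia.
        destruct (lt_dec r (q1 + (p2 + M))). rewrite Hw3 by lia. apply (proj1 Hy2X).
        rewrite Hw4 by lia. lia.
      * intros k Hl.
        assert (Hl' : lex_lt (hat_d beta) (shiftn (k mod q2) z)).
        { eapply lex_ext; [| |exact Hl]; auto. intros i. unfold shiftn. apply Hzmod. }
        assert (Hlt : (k mod q2 < q2)%nat) by (apply Nat.mod_upper_bound; lia).
        set (r := (k mod q2)%nat) in *. clearbody r.
        destruct (lt_dec r (p1 + M)).
        -- apply (block beta z y1 0 (p1 + M) G P1 r); auto; try lia.
           ++ intros i Hi. rewrite Hzw by lia. apply Hw1; lia.
           ++ intros i Hi. rewrite Hzw by lia. apply Hw2; lia.
        -- destruct (lt_dec r q1).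
           ++ apply (gap beta z r); auto. rewrite Hzw by lia. apply Hw2; lia.
           ++ destruct (lt_dec r (q1 + (p2 + M))).
              ** replace r with (q1 + (r - q1))%nat in Hl' by lia.
                 apply (block beta z y2 q1 (p2 + M) G P2 (r - q1)); auto; try lia.
                 --- intros i Hi. rewrite Hzw by lia. rewrite Hw3 by lia. f_equal; lia.
                 --- intros i Hi. rewrite Hzw by lia. apply Hw4; lia.
              ** apply (gap beta z r); auto. rewrite Hzw by lia. apply Hw4; lia.
    + exists q2. split; [lia|]. intros i. unfold shiftn. apply Hzper.
  - intros i. unfold shiftn. apply Hzper.
  - replace q1 with (p1 + (M + G))%nat by lia. rewrite plus_INR.
    pose proof (Hbig p1 Hp1). lra.
  - intros j Hj. eapply Rle_lt_trans; [|exact HM]. apply rho_agree. intros i Hi.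
    unfold shiftn. rewrite Hzw by lia. apply Hw1; lia.
  - replace (q2 - q1)%nat with (p2 + (M + G))%nat by lia. rewrite plus_INR.
    pose proof (Hbig p2 Hp2). lra.
  - intros j Hj. eapply Rle_lt_trans; [|exact HM]. apply rho_agree. intros i Hi.
    unfold shiftn. rewrite Hzw by lia. rewrite Hw3 by lia. f_equal; lia.
Qed.
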